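(* Let $L$ be a geometric lattice of rank $r+1$ with $n$ atoms. Then for all $S\subseteq[r]$, $f_S(L)\le f_S(\mathscr{B}_{r+1,n})$.
   Context: A geometric lattice is a finite graded atomic lattice whose rank function $\rho$ satisfies $\rho(x\vee y)+\rho(x\wedge y)\le \rho(x)+\rho(y)$. For a graded poset $P$ of rank $r+1$ with $\hat 0,\hat 1$ and $S\subseteq[r]=\{1,\dots,r\}$, $f_S(P)$ is the number of chains in $P$ whose elements have ranks exactly the elements of $S$. The truncated Boolean algebra $\mathscr{B}_{r+1,n}$ ($n\ge r+1$) is the poset of all subsets of $[n]$ of cardinality at most $r$, ordered by inclusion, together with an added maximum element $\hat 1$. *)

(* Defs.v *)
From mathcomp Require Import all_boot all_order.
Set Implicit Arguments. Unset Strict Implicit. Unset Printing Implicit Defensive.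
Import Order.Theory.
Local Open Scope order_scope.

(* Ranks S are encoded as a
   set of ordinals [S : {set 'I_k}] (ordinals read as natural numbers).       *)

Definition chainb (T : finType) (le : rel T) (C : {set T}) : bool :=
  [forall x in C, forall y in C, le x y || le y x].

Definition ranks_eq (T : finType) (rk : T -> nat) (k : nat)
    (C : {set T}) (S : {set 'I_k}) : bool :=
  [forall c in C, exists i in S, rk c == val i] &&
  [forall i in S, exists c in C, rk c == val i].

Definition fS (T : finType) (P : pred T) (le : rel T) (rk : T -> nat)
    (k : nat) (S : {set 'I_k}) : nat :=
  #|[set C : {set T} | [&& C \subset P, chainb le C & ranks_eq rk C S]]|.

Section Geometric.
Context {d : Order.disp_t} (L : finTBLatticeType d).

Definition covers (x y : L) : bool := (x < y) && [forall z, ~~ ((x < z) && (z < y))].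

Definition atom (a : L) : bool := covers \bot a.

Definition is_rank_function (rho : L -> nat) : Prop :=
  rho \bot = 0%N /\ (forall x y : L, covers x y -> rho y = (rho x).+1).

Definition atomic_lattice : Prop :=
  forall x : L, x = \join_(a : L | atom a && (a <= x)) a.

Definition geometric (rho : L -> nat) : Prop :=
  [/\ is_rank_function rho, atomic_lattice &
      forall x y : L, (rho (x `|` y) + rho (x `&` y) <= rho x + rho y)%N].

End Geometric.

(* carrier: subsets of [n] (here 'I_n) of size at most r, plus a top [None] *)
Definition trB_carrier (r n : nat) : pred (option {set 'I_n}) :=
  fun o => if o is Some A then (#|A| <= r)%N else true.

Definition trB_le (n : nat) : rel (option {set 'I_n}) :=
  fun o1 o2 => match o1, o2 with
               | _, None => true
               | None, Some _ => false
               | Some A, Some B => A \subset B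
               end.

Definition trB_rank (r n : nat) (o : option {set 'I_n}) : nat :=
  if o is Some A then #|A| else r.+1.

(* Main.v *)
Require Import Defs.
From mathcomp Require Import all_boot all_order.
From mathcomp Require Import zify.
Import Order.Theory.

Section Proof.
Context {d : Order.disp_t} (L : finTBLatticeType d) (rho : L -> nat).
Hypothesis Hg : geometric rho.
Local Open Scope order_scope.

Lemma rho_bot : rho \bot = 0%N.
Proof. by case: Hg => [[]]. Qed.

Lemma rho_cov {x y} : covers x y -> rho y = (rho x).+1.
Proof. by case: Hg => [[_ H]] _ _; apply: H. Qed.

Lemma rho_sub x y : (rho (x `|` y) + rho (x `&` y) <= rho x + rho y)%N.
Proof. by case: Hg. Qed.

Lemma rho_atomic (x : L) : x = \join_(a : L | atom a && (a <= x)) a.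
Proof. by case: Hg => _ H _; apply: H. Qed.

Lemma rho_lt {x y} : x < y -> (rho x < rho y)%N.
Proof.
move=> xy; have [k Hk] := ubnP #|[set z | (x < z) && (z <= y)]|.
elim: k x y xy Hk => [|k IH] x y xy Hk //.
case Hc: (covers x y); first by rewrite (rho_cov Hc).
move: Hc; rewrite /covers xy /= => /negbT/forallPn [z]; rewrite negbK.
move=> /andP [xz zy].
apply: (@ltn_trans (rho z)).
- apply: (IH x z xz); rewrite ltnS in Hk; apply: leq_trans _ Hk; apply: proper_card.
  apply/properP; split.
    apply/subsetP=> w; rewrite !inE => /andP[a b].
    by rewrite a (le_trans b (ltW zy)).
  by exists y; rewrite !inE ?xy ?lexx ?(lt_geF zy) ?andbF.
- apply: (IH z y zy); rewrite ltnS in Hk; apply: leq_trans _ Hk; apply: proper_card.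
  apply/properP; split.
    apply/subsetP=> w; rewrite !inE => /andP[a b].
    by rewrite (lt_trans xz a) b.
  by exists z; rewrite !inE ?xz ?ltxx ?(ltW zy).
Qed.

Lemma rho_le {x y} : x <= y -> (rho x <= rho y)%N.
Proof. by rewrite le_eqVlt => /orP[/eqP->|/rho_lt/ltnW]. Qed.

Lemma rho_atom {a} : atom a -> rho a = 1%N.
Proof. by move/rho_cov; rewrite rho_bot. Qed.

Variable n : nat.
Hypothesis Hn : #|[set a : L | atom a]| = n.

Definition g (i : 'I_n) : L := nth \bot (enum [set a : L | atom a]) i.

Lemma g_atom {i} : atom (g i).
Proof.
have : g i \in enum [set a : L | atom a].
  by apply: mem_nth; rewrite -cardE Hn ltn_ord.
by rewrite mem_enum inE.
Qed.

Lemma atom_g {a} : atom a -> exists i, g i = a.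
Proof.
move=> aa.
have ai : (index a (enum [set a : L | atom a]) < n)%N.
  by rewrite -Hn cardE index_mem mem_enum inE.
by exists (Ordinal ai); rewrite /g /= nth_index // mem_enum inE.
Qed.

Definition phi (A : {set 'I_n}) : L := \join_(i in A) g i.

Lemma extend (A : {set 'I_n}) (y : L) : #|A| = rho (phi A) -> phi A <= y ->
  exists B : {set 'I_n}, [/\ A \subset B, phi B = y & #|B| = rho y].
Proof.
move=> HA Hy; have [k Hk] := ubnP (rho y - #|A|).
elim: k A Hk HA Hy => [|k IH] A Hk HA Hy //.
case: (eqVneq (phi A) y) => [<-|ne]; first by exists A; split.
have lt : phi A < y by rewrite lt_neqAle ne Hy.
have [a [aat ay anA]] : exists a : L, [/\ atom a, a <= y & ~~ (a <= phi A)].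
  case: (boolP [exists a, [&& atom a, a <= y & ~~ (a <= phi A)]]).
    by move=> /existsP[a /and3P[? ? ?]]; exists a.
  move=> /existsPn H.
  have : y <= phi A.
    rewrite {1}(rho_atomic y); apply/joinsP => b /andP[b1 b2].
    by move: (H b); rewrite b1 b2 /= negbK.
  by rewrite lt_geF.
have [i gi] := atom_g aat.
have iA : i \notin A.
  apply/negP => iA; move: anA; rewrite -gi.
  by rewrite (joins_sup (P := fun j => j \in A) g iA).
set B := i |: A.
have phiB : phi B = a `|` phi A by rewrite /phi big_setU1 // gi.
have cB : #|B| = #|A|.+1 by rewrite cardsU1 iA.
have ltB : phi A < phi B.
  rewrite phiB lt_neqAle leUr andbT; apply/negP => /eqP E.
  by move: anA; rewrite E leUl.
have rB : rho (phi B) = (rho (phi A)).+1.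
  apply/eqP; rewrite eqn_leq rho_lt // andbT.
  have := rho_sub a (phi A); rewrite -phiB (rho_atom aat); lia.
have HyB : phi B <= y by rewrite phiB leUx ay Hy.
have := rho_lt lt; have := rho_le HyB => h1 h2.
have h3 : (rho y - #|B| < k)%N by rewrite cB; lia.
have [C [BC phiC cC]] := IH B h3 ltac:(by rewrite cB rB HA) HyB.
exists C; split => //; apply: subset_trans BC; exact: subsetUr.
Qed.


Lemma chain_max {C : {set L}} {c0} : c0 \in C -> chainb (<=%O : rel L) C ->
  exists2 m, m \in C & forall c, c \in C -> c <= m.
Proof.
move=> c0C Hch.
case: (@arg_maxnP _ c0 (fun c => c \in C) rho c0C) => m mC mmax.
exists m => // c cC.
move/forallP: Hch => /(_ c) /implyP /(_ cC) /forallP /(_ m) /implyP /(_ mC).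
case/orP => // mc.
case: (eqVneq m c) => [->|ne]; first by [].
have : m < c by rewrite lt_neqAle ne mc.
move/rho_lt => H; have H2 : (rho c <= rho m)%N := mmax c cC.
by rewrite leqNgt H in H2.
Qed.

Lemma lift (C : {set L}) : chainb (<=%O : rel L) C ->
  exists (D : {set {set 'I_n}}) (A0 : {set 'I_n}),
  [/\ [set phi A | A in D] = C,
      forall A, A \in D -> #|A| = rho (phi A) /\ A \subset A0,
      forall A B, A \in D -> B \in D -> (A \subset B) || (B \subset A),
      #|A0| = rho (phi A0) &
      forall u, (forall c, c \in C -> c <= u) -> phi A0 <= u].
Proof.
have [k Hk] := ubnP #|C|.
elim: k C Hk => [|k IH] C Hk Hch //.
case: (set_0Vmem C) => [->|[c0 c0C]].
  have p0 : phi set0 = \bot by rewrite /phi big_set0.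
  exists set0, set0; split.
  - by rewrite imset0.
  - by move=> A; rewrite in_set0.
  - by move=> A B; rewrite in_set0.
  - by rewrite cards0 p0 rho_bot.
  - by move=> u _; rewrite p0 le0x.
have [m mC mmax] := chain_max c0C Hch.
have Hk' : (#|C :\ m| < k)%N.
  by move: Hk; rewrite (cardsD1 m C) mC.
have Hch' : chainb (<=%O : rel L) (C :\ m).
  apply/forallP => x; apply/implyP => xC; apply/forallP => y; apply/implyP => yC.
  move: xC yC; rewrite !inE => /andP[_ xC] /andP[_ yC].
  by move/forallP: Hch => /(_ x) /implyP /(_ xC) /forallP /(_ y) /implyP /(_ yC).
have [D [A0 [eqD HD chD HA0 upA0]]] := IH _ Hk' Hch'.
have A0m : phi A0 <= m.
  by apply: upA0 => c; rewrite !inE => /andP[_ /mmax].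
have [B [A0B phiB cB]] := extend A0 m HA0 A0m.
exists (B |: D), B; split.
- by rewrite imsetU1 eqD phiB setD1K.
- move=> A; rewrite in_setU1 => /orP[/eqP->|AD]; first by rewrite phiB cB.
  have [h1 h2] := HD A AD; split => //; exact: subset_trans h2 A0B.
- have sub A : A \in D -> A \subset B.
    by move=> AD; have [_ h] := HD A AD; exact: subset_trans h A0B.
  move=> A1 A2; rewrite !in_setU1 => /orP[/eqP->|A1D] /orP[/eqP->|A2D].
  + by rewrite subxx.
  + by rewrite sub ?orbT.
  + by rewrite sub.
  + exact: chD.
- by rewrite phiB cB.
- by move=> u Hu; rewrite phiB; apply: Hu.
Qed.

End Proof.

Theorem corollary3p3 (d : Order.disp_t) (L : finTBLatticeType d)
    (rho : L -> nat) (r n : nat) :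
  geometric rho ->
  rho Order.top = r.+1 ->
  #|[set a : L | atom a]| = n ->
  forall S : {set 'I_r.+1}, S \subset [set i : 'I_r.+1 | (0 < i)%N] ->
  (fS (fun _ : L => true) (<=%O : rel L) rho S
   <= fS (@trB_carrier r n) (@trB_le n) (@trB_rank r n) S)%N.
Proof.
move=> Hg _ Hn S _.
pose phi' (o : option {set 'I_n}) : L :=
  if o is Some A then phi L n A else Order.top.
rewrite /fS.
set Y := [set C0 : {set option {set 'I_n}} | _].
have HY := leq_imset_card (fun D : {set option {set 'I_n}} => phi' @: D) Y.
apply: leq_trans HY.
apply: subset_leq_card; apply/subsetP => C; rewrite inE => /and3P[_ Hch Hr].
have [D [A0 [eqD HD chD _ _]]] := lift L rho Hg n Hn C Hch.
have rkC c : c \in C -> exists2 i : 'I_r.+1, i \in S & rho c = val i.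
  move=> cC; move/andP: Hr => [/forallP/(_ c)/implyP/(_ cC)/existsP[i] H _].
  by case/andP: H => iS /eqP; exists i.
apply/imsetP; exists (Some @: D); last first.
  rewrite -imset_comp -eqD; apply: eq_imset => A //.
rewrite inE; apply/and3P; split.
- apply/subsetP => o /imsetP[A AD ->].
  have [h _] := HD A AD.
  have [i _ ri] := rkC (phi L n A) ltac:(by rewrite -eqD; apply: imset_f).
  by rewrite unfold_in /trB_carrier h ri -ltnS ltn_ord.
- apply/forallP => o1; apply/implyP => /imsetP[A1 A1D ->].
  apply/forallP => o2; apply/implyP => /imsetP[A2 A2D ->] /=.
  exact: chD.
- apply/andP; split.
  + apply/forallP => o; apply/implyP => /imsetP[A AD ->].
    have [h _] := HD A AD.
    have [i iS ri] := rkC (phi L n A) ltac:(by rewrite -eqD; apply: imset_f).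
    by apply/existsP; exists i; rewrite iS /= h ri.
  + apply/forallP => i; apply/implyP => iS.
    move/andP: Hr => [_ /forallP/(_ i)/implyP/(_ iS)/existsP[c /andP[cC /eqP rc]]].
    move: cC; rewrite -eqD => /imsetP[A AD cA].
    have [h _] := HD A AD.
    apply/existsP; exists (Some A); rewrite imset_f //= h -cA rc.
    by [].
Qed.
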